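(* Let $\{M_j\}$ be a collection of hermitian $n\times n$ matrices. If a nontrivial subspace $V\subset\mathbb{C}^n$ is minimal with respect to $\mathrm{Span}_{\mathbb{R}}\{M_j\}$, then no real linear combination of $\{M_j\}$ is positive semi-definite on $V$ unless its restriction to $V$ is zero.
   Context: For a hermitian $n\times n$ matrix $M$ and a subspace $V\subset\mathbb{C}^n$, the restriction of $M$ to $V$ is the restriction of the quadratic form $v\mapsto\bar v^TMv$ to $V$. $\mathrm{Span}_{\mathbb{R}}\{M_j\}$ is indefinite on a nontrivial subspace $V$ if no real linear combination of the $M_j$ is positive definite when restricted to $V$. A nontrivial subspace $V$ is minimal with respect to $\mathrm{Span}_{\mathbb{R}}\{M_j\}$ if $\mathrm{Span}_{\mathbb{R}}\{M_j\}$ is indefinite on $V$ but not indefinite on any nontrivial proper subspace of $V$. *)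

(* Defs.v *)
(* The complex numbers are an arbitrary numClosedFieldType C
   (e.g. algC, or R[i] for a real closed field R); conjugation is Num.conj. *)
From HB Require Import structures.
From mathcomp Require Import all_boot all_order all_algebra.
From mathcomp Require Import sesquilinear.
Set Implicit Arguments. Unset Strict Implicit. Unset Printing Implicit Defensive.
Import Order.TTheory GRing.Theory Num.Theory.
Local Open Scope ring_scope.

(* Subspaces of C^n are represented as row spaces of matrices (mxalgebra);
   vectors are row vectors 'rV_n. *)

(* The quadratic form v |-> conj(v)^T M v (written here, for row vectors,
   as v M v^*, using the library's form_of_matrix). *)
Definition qform {C : numClosedFieldType} {n : nat} (M : 'M[C]_n) (v : 'rV[C]_n) : C :=
  form_of_matrix Num.conj M v v.

Definition in_real_span {C : numClosedFieldType} {n : nat} {I : Type}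
  (M : I -> 'M[C]_n) (A : 'M[C]_n) : Prop :=
  exists (s : seq I) (c : I -> C),
    (forall j, c j \is Num.real) /\ A = \sum_(j <- s) c j *: M j.

Definition pos_def_on {C : numClosedFieldType} {m n : nat}
  (A : 'M[C]_n) (V : 'M[C]_(m, n)) : Prop :=
  forall v : 'rV[C]_n, (v <= V)%MS -> v != 0 -> 0 < qform A v.

Definition pos_semidef_on {C : numClosedFieldType} {m n : nat}
  (A : 'M[C]_n) (V : 'M[C]_(m, n)) : Prop :=
  forall v : 'rV[C]_n, (v <= V)%MS -> 0 <= qform A v.

Definition zero_on {C : numClosedFieldType} {m n : nat}
  (A : 'M[C]_n) (V : 'M[C]_(m, n)) : Prop :=
  forall v : 'rV[C]_n, (v <= V)%MS -> qform A v = 0.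

Definition span_indefinite_on {C : numClosedFieldType} {m n : nat} {I : Type}
  (M : I -> 'M[C]_n) (V : 'M[C]_(m, n)) : Prop :=
  forall A, in_real_span M A -> ~ pos_def_on A V.

Definition minimal_wrt_span {C : numClosedFieldType} {n : nat} {I : Type}
  (M : I -> 'M[C]_n) (V : 'M[C]_n) : Prop :=
  V != 0 /\ span_indefinite_on M V /\
  forall W : 'M[C]_n, W != 0 -> (W < V)%MS -> ~ span_indefinite_on M W.

(* Main.v *)
Require Import Defs.
From HB Require Import structures.
From mathcomp Require Import all_boot all_order all_algebra.
From mathcomp Require Import sesquilinear.
From mathcomp Require Import ring.
From Stdlib Require Import Classical ClassicalEpsilon.
Import Order.TTheory GRing.Theory Num.Theory.
Local Open Scope ring_scope.
Set Implicit Arguments. Unset Strict Implicit.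

Section Aux.
Variables (C : numClosedFieldType) (n : nat).
Implicit Types (A B : 'M[C]_n) (u v w : 'rV[C]_n).

Definition bf A u v : C := form_of_matrix Num.conj A u v.

Lemma bfE A u v : bf A u v = (u *m A *m map_mx Num.conj v^T) 0 0.
Proof. by rewrite /bf /form_of_matrix trace_mx11. Qed.

Lemma qformE A v : qform A v = bf A v v.
Proof. by []. Qed.

Lemma bfDl A u v w : bf A (u + v) w = bf A u w + bf A v w.
Proof. by rewrite !bfE !mulmxDl mxE. Qed.

Lemma bfZl A s u w : bf A (s *: u) w = s * bf A u w.
Proof. by rewrite !bfE -!scalemxAl mxE. Qed.

Lemma bfDr A u v w : bf A u (v + w) = bf A u v + bf A u w.
Proof. by rewrite !bfE linearD /= map_mxD mulmxDr mxE. Qed.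

Lemma bfZr A s u w : bf A u (s *: w) = s^* * bf A u w.
Proof. by rewrite !bfE linearZ /= map_mxZ -scalemxAr mxE. Qed.

Lemma bfNl A u w : bf A (- u) w = - bf A u w.
Proof. by rewrite -scaleN1r bfZl mulN1r. Qed.

Lemma bfNr A u w : bf A u (- w) = - bf A u w.
Proof. by rewrite -scaleN1r bfZr rmorphN1 mulN1r. Qed.

Lemma bfBr A u v w : bf A u (v - w) = bf A u v - bf A u w.
Proof. by rewrite bfDr bfNr. Qed.

Lemma bf0l A w : bf A 0 w = 0.
Proof. by rewrite bfE !mul0mx mxE. Qed.

Lemma bf0r A u : bf A u 0 = 0.
Proof. by rewrite bfE linear0 map_mx0 mulmx0 mxE. Qed.

Lemma bfM A B t u v : bf (t *: A + B) u v = t * bf A u v + bf B u v.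
Proof. by rewrite !bfE mulmxDr mulmxDl -scalemxAr -scalemxAl !mxE. Qed.

Lemma qexp A u w l :
  qform A (u + l *: w) =
  qform A u + l^* * bf A u w + l * bf A w u + l * l^* * qform A w.
Proof. rewrite !qformE !bfDl !bfDr !bfZl !bfZr. ring. Qed.

Definition hermp A := A \is hermsymmx.

Lemma bf_herm A u v : hermp A -> bf A u v = (bf A v u)^*.
Proof.
move=> hA.
have := @form_of_matrix_is_hermitian C n false Num.conj (HermitianMx hA) 1 u v.
by rewrite expr0 mul1r.
Qed.

Lemma qform_real A v : hermp A -> qform A v \is Num.real.
Proof. by move=> hA; rewrite CrealE qformE -bf_herm. Qed.

Lemma herm0 : hermp 0.
Proof. by apply/is_hermitianmxP; rewrite expr0 scale1r linear0 map_mx0. Qed.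

Lemma hermD A B : hermp A -> hermp B -> hermp (A + B).
Proof.
move=> /is_hermitianmxP hA /is_hermitianmxP hB; apply/is_hermitianmxP.
rewrite expr0 scale1r linearD /= map_mxD.
by rewrite {1}hA {1}hB !expr0 !scale1r.
Qed.

Lemma hermZ A t : t \is Num.real -> hermp A -> hermp (t *: A).
Proof.
move=> tr /is_hermitianmxP hA; apply/is_hermitianmxP.
rewrite expr0 scale1r linearZ /= map_mxZ.
rewrite {1}hA expr0 scale1r.
move: tr; rewrite CrealE => /eqP tr.
by rewrite -[in LHS]tr.
Qed.

End Aux.
Arguments bf {C n}.
Arguments hermp {C n}.

Section Span.
Variables (C : numClosedFieldType) (n : nat) (I : Type) (M : I -> 'M[C]_n).

Lemma count_sum (dec : I -> bool) (x : I) (decP : forall j, dec j -> j = x)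
  (e : I -> C) (s : seq I) :
  \sum_(j <- s) e j *: M j =
  ((count dec s)%:R * e x) *: M x + \sum_(j <- s | ~~ dec j) e j *: M j.
Proof.
elim: s => [|y s IH]; first by rewrite !big_nil /= mul0r scale0r addr0.
rewrite !big_cons /= IH.
case hy: (dec y) => /=.
  have -> := decP _ hy.
  by rewrite natrD mulrDl scalerDl mul1r addrA.
by rewrite add0n addrCA.
Qed.

Lemma span_cons (a : C) (x : I) (B : 'M[C]_n) :
  a \is Num.real -> in_real_span M B -> in_real_span M (a *: M x + B).
Proof.
move=> ar [s [c [cr ->]]].
pose dec j : bool := if excluded_middle_informative (j = x) then true else false.
have decP j : dec j -> j = x.
  by rewrite /dec; case: (excluded_middle_informative (j = x)).
have decx : dec x by rewrite /dec; case: (excluded_middle_informative (x = x)).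
pose k := count dec s.
pose d := (a + c x * k%:R) / (k.+1)%:R.
pose c' j := if dec j then d else c j.
exists (x :: s), c'; split.
  move=> j; rewrite /c'; case: (dec j); last exact: cr.
  by rewrite /d rpredM ?rpredV ?rpredD ?rpredM ?rpred_nat.
rewrite big_cons (@count_sum dec x decP c) (@count_sum dec x decP c').
have -> : \sum_(j <- s | ~~ dec j) c' j *: M j = \sum_(j <- s | ~~ dec j) c j *: M j.
  by apply: eq_bigr => j /negbTE hj; rewrite /c' hj.
rewrite /c' decx -/k addrA -scalerDl addrA -scalerDl; congr (_ *: _ + _).
have hk : (k.+1)%:R != 0 :> C by rewrite pnatr_eq0.
rewrite /d; field.
by rewrite -natr1 addrC in hk.
Qed.

Lemma span_lin (t : C) (A B : 'M[C]_n) :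
  t \is Num.real -> in_real_span M A -> in_real_span M B ->
  in_real_span M (t *: A + B).
Proof.
move=> tr [s [c [cr ->]]]; elim: s B => [|x s IH] B hB.
  by rewrite big_nil scaler0 add0r.
rewrite big_cons scalerDr scalerA -addrA.
apply: span_cons; first by rewrite rpredM.
exact: IH.
Qed.

Lemma span_herm (A : 'M[C]_n) :
  (forall j, hermp (M j)) -> in_real_span M A -> hermp A.
Proof.
move=> hM [s [c [cr ->]]]; elim: s => [|x s IH].
  by rewrite big_nil; apply: herm0.
by rewrite big_cons; apply: hermD => //; apply: hermZ.
Qed.
End Span.

Section Main.
Variables (C : numClosedFieldType) (n : nat).

Lemma mx11_eq0 (X : 'M[C]_1) : (X == 0) = (X 0 0 == 0).
Proof.
apply/eqP/eqP => [->|e]; first by rewrite mxE.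
by rewrite [X]mx11_scalar e; apply/matrixP => i j; rewrite !mxE mul0rn.
Qed.

Lemma cs_zero (A : 'M[C]_n) (V : 'M[C]_n) w v :
  hermp A -> pos_semidef_on A V -> (w <= V)%MS -> (v <= V)%MS ->
  qform A w = 0 -> bf A w v = 0.
Proof.
move=> hA psd hw hv qw0.
set y := bf A w v; set q := qform A v.
have q0 : 0 <= q by apply: psd.
have q1 : 0 < q + 1 by apply: ltr_wpDl q0 ltr01.
set r := (q + 1)^-1.
have r0 : 0 < r by rewrite invr_gt0.
have rr : r^* = r by apply/eqP; rewrite -CrealE; apply: ger0_real; apply: ltW.
set s := - (r * y).
have hu := psd (w + s *: v) (addmx_sub hw (scalemx_sub s hv)).
rewrite qexp qw0 -/q (bf_herm v w hA) -/y in hu.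
have E : s^* = - (r * y^*) by rewrite /s rmorphN rmorphM; congr (- (_ * _)); exact: rr.
rewrite E /s in hu.
have E2 : 0 + - (r * y^*) * y + - (r * y) * y^* + - (r * y) * - (r * y^*) * q
   = (r * (y * y^*)) * (r * q - 2) by ring.
rewrite E2 in hu.
apply/eqP; apply/negPn/negP => ynz.
have p0 : 0 < r * (y * y^*) by rewrite mulr_gt0 // mul_conjC_gt0.
have rq1 : r * q < 1.
  by rewrite mulrC ltr_pdivrMr // mul1r ltrDl ltr01.
have rq2 : r * q - 2 < 0.
  rewrite subr_lt0; apply: lt_trans rq1 _; by rewrite (ltr1n C 2).
have : r * (y * y^*) * (r * q - 2) < 0 by rewrite pmulr_rlt0.
by move=> lt0; have := le_lt_trans hu lt0; rewrite ltxx.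
Qed.

Lemma proj_exists (B H : 'M[C]_n) v0 :
  pos_def_on B H ->
  exists p, (p <= H)%MS /\ forall h, (h <= H)%MS -> bf B h (v0 - p) = 0.
Proof.
move=> pd.
set Hb := row_base H.
have hHb u : (u <= H)%MS = (u <= Hb)%MS by rewrite eq_row_base.
set Gm := Hb *m B *m map_mx Num.conj Hb^T.
have Gu : Gm \in unitmx.
  rewrite -row_free_unit -kermx_eq0; apply/eqP/row_matrixP => i.
  rewrite row0; apply/eqP; apply/negPn/negP => nz.
  set x := row i (kermx Gm).
  have xG : x *m Gm = 0 by rewrite /x -row_mul mulmx_ker row0.
  have y0 : x *m Hb != 0 by rewrite mulmx_free_eq0 ?row_base_free.
  have yH : (x *m Hb <= H)%MS by rewrite hHb submxMl.
  have := pd _ yH y0; rewrite qformE bfE trmx_mul map_mxM.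
  have -> : x *m Hb *m B *m (map_mx Num.conj Hb^T *m map_mx Num.conj x^T)
          = x *m Gm *m map_mx Num.conj x^T by rewrite /Gm !mulmxA.
  by rewrite xG mul0mx mxE ltxx.
set c := Hb *m B *m map_mx Num.conj v0^T.
set z := invmx Gm *m c.
set y0 := map_mx Num.conj z^T.
exists (y0 *m Hb); split; first by rewrite hHb submxMl.
move=> h; rewrite hHb => /submxP [x ->].
rewrite bfBr !bfE.
have -> : map_mx Num.conj (y0 *m Hb)^T = map_mx Num.conj Hb^T *m z.
  rewrite trmx_mul map_mxM /y0; congr (_ *m _).
  by apply/matrixP => i j; rewrite !mxE; exact: conjCK.
have -> : x *m Hb *m B *m map_mx Num.conj v0^T = x *m c by rewrite /c !mulmxA.
have -> : x *m Hb *m B *m (map_mx Num.conj Hb^T *m z) = x *m (Gm *m z)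
  by rewrite /Gm !mulmxA.
by rewrite /z mulKVmx // subrr.
Qed.

End Main.

Theorem mainTheorem7 (C : numClosedFieldType) (n : nat) (I : Type)
  (M : I -> 'M[C]_n)
  (herm : forall j, M j \is hermsymmx)
  (V : 'M[C]_n) (Vmin : minimal_wrt_span M V) :
  forall A : 'M[C]_n, in_real_span M A ->
    pos_semidef_on A V -> zero_on A V.
Proof.
move=> A spA psdA v hv; apply: NNPP => nz.
case: Vmin => [V0 [indV minV]].
have hA : hermp A := span_herm herm spA.
set a := qform A v.
have a0 : 0 < a by rewrite lt_def psdA // andbT; apply/eqP.
have an0 : a != 0 by rewrite gt_eqF.
case: (classic (exists w, (w <= V)%MS /\ w != 0 /\ qform A w = 0)) => [[w [hw [w0 qw]]]|nw]; last first.
  apply: (indV A spA) => u hu u0; rewrite lt_def psdA // andbT.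
  by apply/eqP => e; apply: nw; exists u.
set H := (V :&: kermx (A *m map_mx Num.conj v^T))%MS.
have memH h : (h <= H)%MS = (h <= V)%MS && (bf A h v == 0).
  by rewrite sub_capmx sub_kermx mulmxA mx11_eq0 -bfE.
have wH : (w <= H)%MS by rewrite memH hw /= (cs_zero hA psdA hw hv qw).
have H0 : H != 0.
  by apply/eqP => H0; move: wH; rewrite H0 submx0 (negbTE w0).
have HV : (H < V)%MS.
  rewrite ltmxE capmxSl /=; apply/negP => VH.
  by move: (submx_trans hv VH); rewrite memH hv /= -qformE -/a (negbTE an0).
apply: (minV H H0 HV) => B spB pdB.
have hB : hermp B := span_herm herm spB.
have [p [hp orth]] := proj_exists v pdB.
set u := v - p.
set beta := qform B u.
have br : beta \is Num.real by apply: qform_real.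
set t := (`|beta| + 1) / a.
have t0 : 0 <= t by rewrite divr_ge0 ?addr_ge0 ?normr_ge0 ?ler01 ?ltW.
have tr : t \is Num.real by apply: ger0_real.
have ta : t * a = `|beta| + 1 by rewrite /t divfK.
have key : 0 < t * a + beta.
  rewrite ta -addrA [1 + _]addrC addrA; apply: ltr_wpDl ltr01.
  have hb : - beta <= `|beta| by rewrite -normrN real_ler_norm ?rpredN.
  by rewrite -[X in 0 <= _ + X]opprK subr_ge0.
apply: (indV (t *: A + B) (span_lin tr spA spB)) => x hx x0.
set l := bf A x v / a.
set h := x + (- l) *: v.
have xE : x = h + l *: v by rewrite /h scaleNr subrK.
have hV : (h <= V)%MS by rewrite addmx_sub // scalemx_sub.
have hv0 : bf A h v = 0.
  by rewrite /h bfDl bfZl -qformE -/a /l mulNr divfK // subrr.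
have vh0 : bf A v h = 0 by rewrite bf_herm // hv0 rmorph0.
have hH : (h <= H)%MS by rewrite memH hV hv0 eqxx.
have qAx : qform A x = qform A h + l * l^* * a.
  by rewrite xE qexp hv0 vh0 !mulr0 !addr0.
set h' := h + l *: p.
have h'H : (h' <= H)%MS by rewrite addmx_sub // scalemx_sub.
have xE' : x = h' + l *: u by rewrite /h' /u scalerBr addrA addrAC addrK.
have h'u : bf B h' u = 0 by apply: orth.
have uh' : bf B u h' = 0 by rewrite bf_herm // h'u rmorph0.
have qBx : qform B x = qform B h' + l * l^* * beta.
  by rewrite xE' qexp h'u uh' !mulr0 !addr0.
rewrite qformE bfM -!qformE.
have psdAh : 0 <= qform A h by apply: psdA.
have psdBh' : 0 <= qform B h'.
  have [->|nz'] := eqVneq h' 0; first by rewrite qformE bf0l.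
  by apply: ltW; apply: pdB.
have [l0|ln0] := eqVneq l 0.
  have hx' : h = x by rewrite xE l0 scale0r addr0.
  rewrite qAx l0 mul0r mul0r addr0.
  apply: ltr_wpDl; first by rewrite mulr_ge0.
  by rewrite -hx'; apply: pdB => //; rewrite hx'.
have -> : t * qform A x + qform B x =
   (t * qform A h + qform B h') + l * l^* * (t * a + beta)
  by rewrite qAx qBx; ring.
apply: ltr_wpDl.
  by apply: addr_ge0 => //; apply: mulr_ge0.
by rewrite mulr_gt0 // mul_conjC_gt0.
Qed.
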